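(* Let $\mathbf x\in\mathbb{R}^p$ be independent variables and $\mathbf u\in\mathbb{R}^q$ dependent variables, and consider a system of $q$ differential equations of the form $\boldsymbol\ell(\mathbf x,\mathbf u^{(n)}) = W\boldsymbol\theta(\mathbf x,\mathbf u^{(n)})$, where $\boldsymbol\ell=(\ell^1,\dots,\ell^q)$ and $\boldsymbol\theta=(\theta^1,\dots,\theta^m)$ are fixed functions on the $n$th order jet space and $W\in\mathbb{R}^{q\times m}$ is a constant coefficient matrix, and suppose the system admits a symmetry group $G$. Assume there exist $n$th-order differential invariants of $G$, $\eta_0^1,\dots,\eta_0^q$ and $\eta^1,\dots,\eta^K$, such that (1) the system of equations can be expressed as $\boldsymbol\eta_0 = W'\boldsymbol\theta'(\boldsymbol\eta)$, where $\boldsymbol\eta_0=(\eta_0^1,\dots,\eta_0^q)$ and $\boldsymbol\eta=(\eta^1,\dots,\eta^K)$, and (2) $\eta_0^i = T^{ijk}\theta^k\ell^j$ and $(\theta')^i = S^{ij}\theta^j$ (summation over repeated indices), for some functions $\boldsymbol\theta'(\boldsymbol\eta)=((\theta')^1,\dots,(\theta')^{m'})$ and constant tensors $W'\in\mathbb{R}^{q\times m'}$, $T$ and $S$. Then the space of all possible coefficient matrices $W$ (i.e. those for which the system $\boldsymbol\ell=W\boldsymbol\theta$ can be so expressed, for some $W'$, with the given invariants, functions $\boldsymbol\theta'$ and tensors $T,S$) is a linear subspace of $\mathbb{R}^{q\times m}$.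
   Context: The $n$th order jet space $M^{(n)}$ has coordinates $(\mathbf x,\mathbf u^{(n)})$, where $\mathbf u^{(n)}$ collects $\mathbf u$ and all its partial derivatives with respect to $\mathbf x$ up to order $n$. A symmetry group of a system of differential equations is a local group $G$ of point transformations of $(\mathbf x,\mathbf u)$-space that maps solutions of the system to solutions; it acts on $M^{(n)}$ by the induced (prolonged) action $g^{(n)}$. An $n$th-order differential invariant of $G$ is a smooth function $\eta:M^{(n)}\to\mathbb{R}$ with $\eta(g^{(n)}\cdot z)=\eta(z)$ for all $g\in G$ and all $z\in M^{(n)}$ where defined. Repeated indices are summed (Einstein convention). *)

(* Defs.v *)
From HB Require Import structures.
From mathcomp Require Import all_boot all_order all_algebra.
From mathcomp Require Import reals.
Set Implicit Arguments. Unset Strict Implicit. Unset Printing Implicit Defensive.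
Import Order.TTheory GRing.Theory Num.Theory.
Local Open Scope ring_scope.

(* Dimension of the n-th order jet space M^(n) over (x,u) in R^p x R^q:
   p independent coordinates x plus, for each of the q dependent variables,
   all partial derivatives of order 0..n, i.e. q * C(p+n, n) coordinates. *)
Definition jet_dim (p q n : nat) : nat := (p + q * 'C(p + n, n))%N.

Definition jet (R : realType) (p q n : nat) := 'rV[R]_(jet_dim p q n).

(* eta is a differential invariant of the (prolonged, local) action act of G
   on jet space; dom g z says that g^(n) . z is defined. *)
Definition diff_invariant (R : realType) (J G : Type)
  (dom : G -> J -> Prop) (act : G -> J -> J) (eta : J -> R) : Prop :=
  forall g z, dom g z -> eta (act g z) = eta z.

(* W is admissible: the system  ell = W theta  can be expressed as
   eta0 = W' theta'(eta) for some W', i.e. the invariant system is obtained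
   from the original one through the relation eta0^i = T^{ijk} theta^k ell^j:
     eta0^i - (W' theta'(eta))^i = T^{ijk} theta^k (ell^j - (W theta)^j)
   identically on jet space. *)
Definition admissible_coeff (R : realType) (J : Type) (q m m' K : nat)
  (ell : J -> 'I_q -> R) (theta : J -> 'I_m -> R)
  (eta0 : J -> 'I_q -> R) (eta : J -> 'I_K -> R)
  (theta' : ('I_K -> R) -> 'I_m' -> R)
  (T : 'I_q -> 'I_q -> 'I_m -> R) (W : 'M[R]_(q, m)) : Prop :=
  exists W' : 'M[R]_(q, m'), forall (z : J) (i : 'I_q),
    eta0 z i - \sum_(a < m') W' i a * theta' (eta z) a
    = \sum_(j < q) \sum_(k < m)
        T i j k * theta z k * (ell z j - \sum_(l < m) W j l * theta z l).

(* Main.v *)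
Require Import Defs.
From HB Require Import structures.
From mathcomp Require Import all_boot all_order all_algebra.
From mathcomp Require Import reals.
From mathcomp Require Import zify ring.
From Stdlib Require Import Classical.
Import Order.TTheory GRing.Theory Num.Theory.
Local Open Scope ring_scope.
Lemma vspace_of_pred (K : fieldType) (V : vectType K) (P : V -> Prop) :
  P 0 -> (forall a x y, P x -> P y -> P (a *: x + y)) ->
  exists U : {vspace V}, forall x, x \in U <-> P x.
Proof.
move=> P0 PL.
have PD x y : P x -> P y -> P (x + y) by move=> ??; rewrite -[x]scale1r; apply: PL.
have PZ a x : P x -> P (a *: x) by move=> ?; rewrite -[_ *: _]addr0; apply: PL.
suff H : forall k (U : {vspace V}), (\dim (fullv : {vspace V}) - \dim U <= k)%N ->
  (forall x, x \in U -> P x) -> exists U' : {vspace V},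
  (forall x, x \in U' -> P x) /\ (forall x, P x -> x \in U').
  have h0 : forall x, x \in (0%VS : {vspace V}) -> P x.
    by move=> x; rewrite memv0 => /eqP ->.
  have [U' [H1 H2]] := H _ 0%VS (leqnn _) h0.
  by exists U'; split; [apply: H1| apply: H2].
elim=> [|k IH] U hk hU.
  exists U; split=> // x Px.
  have : (U == fullv)%VS.
    by rewrite eqEdim subvf /= -subn_eq0 -leqn0.
  by move/eqP ->; rewrite memvf.
have [[x [Px xU]]|nex] := classic (exists x, P x /\ x \notin U); last first.
  exists U; split=> // x Px; apply: NNPP => xU; apply: nex; exists x; split=> //.
  by apply/negP.
have sU : (U <= U + <[x]>)%VS by apply: addvSl.
have ltd : (\dim U < \dim (U + <[x]>))%N.
  rewrite ltnNge; apply/negP => hd.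
  have : (U == U + <[x]>)%VS by rewrite eqEdim sU hd.
  move/eqP => E; move/negP: xU; apply; rewrite E.
  by apply: subvP (addvSr U _) _ (memv_line x).
apply: (IH (U + <[x]>)%VS).
  have := dimvS (subvf (U + <[x]>)%VS).
  move=> hf; lia.
move=> y /memv_addP [u uU [v /vlineP [c ->] ->]].
rewrite addrC; apply: PL => //; exact: hU.
Qed.

Theorem proposition4p4 (R : realType) (p q n m m' K : nat)
  (G : Type) (dom : G -> jet R p q n -> Prop)
  (act : G -> jet R p q n -> jet R p q n)
  (ell : jet R p q n -> 'I_q -> R) (theta : jet R p q n -> 'I_m -> R)
  (eta0 : jet R p q n -> 'I_q -> R) (eta : jet R p q n -> 'I_K -> R)
  (theta' : ('I_K -> R) -> 'I_m' -> R)
  (T : 'I_q -> 'I_q -> 'I_m -> R) (S : 'I_m' -> 'I_m -> R) :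
  (forall i, diff_invariant dom act (fun z => eta0 z i)) ->
  (forall a, diff_invariant dom act (fun z => eta z a)) ->
  (forall z i, eta0 z i = \sum_(j < q) \sum_(k < m) T i j k * theta z k * ell z j) ->
  (forall z a, theta' (eta z) a = \sum_(b < m) S a b * theta z b) ->
  exists U : {vspace 'M[R]_(q, m)},
    forall W : 'M[R]_(q, m),
      (W \in U) <-> admissible_coeff ell theta eta0 eta theta' T W.
Proof.
move=> _ _ H3 _.
pose Q (W : 'M[R]_(q, m)) := exists W' : 'M[R]_(q, m'), forall z i,
  \sum_(a < m') W' i a * theta' (eta z) a =
  \sum_(j < q) \sum_(k < m) T i j k * theta z k * (\sum_(l < m) W j l * theta z l).
have EQ W : admissible_coeff ell theta eta0 eta theta' T W <-> Q W.
  have E z i : \sum_(j < q) \sum_(k < m)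
        T i j k * theta z k * (ell z j - \sum_(l < m) W j l * theta z l)
      = eta0 z i - \sum_(j < q) \sum_(k < m) T i j k * theta z k * (\sum_(l < m) W j l * theta z l).
    rewrite H3 -sumrB; apply: eq_bigr => j _; rewrite -sumrB; apply: eq_bigr => k _.
    by rewrite mulrBr.
  have canc (a b c : R) : a - b = a - c -> b = c.
    by move=> h; rewrite -(opprK b) -(opprK c); congr (- _); apply: (addrI a).
  split=> -[W' HW]; exists W' => z i; have := HW z i; rewrite ?E.
    exact: canc.
  by move=> ->.
have [U HU] : exists U : {vspace 'M[R]_(q, m)}, forall W, W \in U <-> Q W.
  apply: vspace_of_pred.
    exists 0 => z i.
    rewrite [LHS]big1; last by move=> a _; rewrite mxE mul0r.
    rewrite [RHS]big1 // => j _; rewrite big1 // => k _.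
    by rewrite big1 ?mulr0 // => l _; rewrite mxE mul0r.
  move=> c X Y [X' HX] [Y' HY]; exists (c *: X' + Y') => z i.
  have -> : \sum_(a < m') (c *: X' + Y') i a * theta' (eta z) a =
     c * \sum_(a < m') X' i a * theta' (eta z) a + \sum_(a < m') Y' i a * theta' (eta z) a.
    rewrite mulr_sumr -big_split; apply: eq_bigr => a _; rewrite /= !mxE; ring.
  rewrite HX HY mulr_sumr -big_split; apply: eq_bigr => j _.
  rewrite mulr_sumr -big_split; apply: eq_bigr => k _.
  rewrite mulr_sumr mulr_sumr mulr_sumr -big_split /= mulr_sumr; apply: eq_bigr => l _.
  rewrite !mxE; ring.
by exists U => W; rewrite HU EQ.
Qed.
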